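(* Let $\mathcal B$ be a finite set of finite Cornish algebras of type $F$ and let $\mathcal Y=\{D(\mathbf A)\mid\mathbf A\in\mathcal B\}$. Then the following are equivalent: (1) the algebras in $\mathcal B$ are quasi-primal and share a common ternary discriminator term; (2) for all $\mathbb X_1,\mathbb X_2\in\mathcal Y$, for each Cornish space $\mathbb Y$ of type $F$ and every pair $\phi_1\colon\mathbb X_1\to\mathbb Y$, $\phi_2\colon\mathbb X_2\to\mathbb Y$ of jointly surjective morphisms, either $\mathbb Y=\mathbb Y_1\,\dot\cup\,\mathbb Y_2$ where $\mathbb Y_i:=\phi_i(\mathbb X_i)$ for $i=1,2$, or both $\phi_1$ and $\phi_2$ are surjective; (3) each $\mathbb X\in\mathcal Y$ has no non-empty proper substructures and, for all $\mathbb X_1,\mathbb X_2\in\mathcal Y$, for each Cornish space $\mathbb Y$ of type $F$ and every pair $\phi_1\colon\mathbb X_1\to\mathbb Y$, $\phi_2\colon\mathbb X_2\to\mathbb Y$ of jointly surjective morphisms, if $\phi_1(a)$ and $\phi_2(b)$ are comparable for some $a\in X_1$ and $b\in X_2$, then there exist $c\in X_1$ and $d\in X_2$ with $\phi_1(c)=\phi_2(d)$.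
   Context: $F=F^+\,\dot\cup\,F^-$ is a set of unary operation symbols. A Cornish algebra of type $F$: a bounded distributive lattice $\langle A;\vee,\wedge,0,1\rangle$ with unary operations $f^{\mathbf A}$ ($f\in F$), an endomorphism for $f\in F^+$ and a dual endomorphism for $f\in F^-$. A Cornish space of type $F$: a Priestley space $\langle X;\le,\mathscr T\rangle$ with unary operations $f^{\mathbb X}$ ($f\in F$) that are continuous and order-preserving for $f\in F^+$, continuous and order-reversing for $f\in F^-$; morphisms are continuous order-preserving maps commuting with every $f$. A substructure of a Cornish space is a topologically closed subset closed under all $f^{\mathbb X}$. For a Cornish algebra $\mathbf A$, $D(\mathbf A)$ is the set of bounded-lattice homomorphisms $x\colon\langle A;\vee,\wedge,0,1\rangle\to\mathbf 2$, ordered pointwise, with topology inherited from $\{0,1\}^A$, and $f^{D(\mathbf A)}(x)=x\circ f^{\mathbf A}$ if $f\in F^+$, $f^{D(\mathbf A)}(x)=c\circ x\circ f^{\mathbf A}$ if $f\in F^-$, where $c$ is Boolean complementation on $\{0,1\}$. For a morphism $\phi\colon\mathbb X\to\mathbb Y$, $\phi(\mathbb X)$ is the substructure of $\mathbb Y$ with underlying set $\phi(X)$. Morphisms $\phi_1,\phi_2$ into $\mathbb Y$ are jointly surjective if $\phi_1(X_1)\cup\phi_2(X_2)=Y$. $\mathbb Y=\mathbb Y_1\,\dot\cup\,\mathbb Y_2$ means $Y_1\cap Y_2=\emptyset$, $Y=Y_1\cup Y_2$ and no element of $Y_1$ is comparable with an element of $Y_2$. Quasi-primal: finite algebra having the ternary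 discriminator ($\tau(x,y,z)=x$ if $x\ne y$, $=z$ if $x=y$) as a term function; sharing a common ternary discriminator term: one ternary term induces $\tau$ on each algebra. *)

(* Defs.v *)
From HB Require Import structures.
From mathcomp Require Import all_boot all_order all_algebra.
From mathcomp Require Import all_classical topology function_spaces subtype_topology.

Set Implicit Arguments.
Unset Strict Implicit.
Unset Printing Implicit Defensive.

Local Open Scope classical_set_scope.

(** * Type F = F^+ \dot\cup F^- : a type of unary operation symbols together
    with a sign; [Fpos f = true] iff f \in F^+, [Fpos f = false] iff f \in F^-. *)

Definition lat_endo (d : Order.disp_t) (L : tbDistrLatticeType d) (g : L -> L) :=
  [/\ forall a b, g (Order.join a b) = Order.join (g a) (g b),
      forall a b, g (Order.meet a b) = Order.meet (g a) (g b),
      g Order.bottom = Order.bottom & g Order.top = Order.top].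

Definition lat_dual_endo (d : Order.disp_t) (L : tbDistrLatticeType d) (g : L -> L) :=
  [/\ forall a b, g (Order.join a b) = Order.meet (g a) (g b),
      forall a b, g (Order.meet a b) = Order.join (g a) (g b),
      g Order.bottom = Order.top & g Order.top = Order.bottom].

Record CornishAlg (F : Type) (Fpos : F -> bool) := {
  ca_disp : Order.disp_t;
  ca_car : finTBDistrLatticeType ca_disp;
  ca_op : F -> ca_car -> ca_car;
  ca_op_hom : forall f, if Fpos f then lat_endo (ca_op f) else lat_dual_endo (ca_op f)
}.
Arguments ca_op {F Fpos} c f _ : rename.

Inductive term (F V : Type) : Type :=
  | tvar of V
  | tjoin of term F V & term F V
  | tmeet of term F V & term F V
  | tbot
  | ttop
  | tapp of F & term F V.

Fixpoint teval (F : Type) (Fpos : F -> bool) (A : CornishAlg Fpos) (V : Type)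
    (e : V -> ca_car A) (t : term F V) : ca_car A :=
  match t with
  | tvar v => e v
  | tjoin t1 t2 => Order.join (teval e t1) (teval e t2)
  | tmeet t1 t2 => Order.meet (teval e t1) (teval e t2)
  | tbot => Order.bottom
  | ttop => Order.top
  | tapp f t1 => ca_op A f (teval e t1)
  end.

Definition env3 (T : Type) (x y z : T) : 'I_3 -> T :=
  fun i => nth x [:: x; y; z] i.

Definition is_discriminator_term (F : Type) (Fpos : F -> bool) (A : CornishAlg Fpos)
    (t : term F 'I_3) : Prop :=
  forall x y z : ca_car A, teval (env3 x y z) t = (if x == y then z else x).

Definition quasi_primal (F : Type) (Fpos : F -> bool) (A : CornishAlg Fpos) : Prop :=
  exists t : term F 'I_3, is_discriminator_term A t.

Definition up_set (T : Type) (le : T -> T -> Prop) (U : set T) :=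
  forall x y, U x -> le x y -> U y.

Record CornishSpace (F : Type) (Fpos : F -> bool) := {
  cs_car : topologicalType;
  cs_le : cs_car -> cs_car -> Prop;
  cs_le_refl : forall x, cs_le x x;
  cs_le_anti : forall x y, cs_le x y -> cs_le y x -> x = y;
  cs_le_trans : forall x y z, cs_le x y -> cs_le y z -> cs_le x z;
  cs_compact : compact [set: cs_car];
  cs_priestley : forall x y, ~ cs_le x y ->
      exists U : set cs_car, [/\ clopen U, up_set cs_le U, U x & ~ U y];
  cs_op : F -> cs_car -> cs_car;
  cs_op_cont : forall f, continuous (cs_op f);
  cs_op_mono : forall f x y, cs_le x y ->
      if Fpos f then cs_le (cs_op f x) (cs_op f y) else cs_le (cs_op f y) (cs_op f x)
}.
Arguments cs_le {F Fpos} c _ _ : rename.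
Arguments cs_op {F Fpos} c f _ : rename.

Definition lat_hom2 (d : Order.disp_t) (L : tbDistrLatticeType d) (x : L -> bool) :=
  [/\ forall a b, x (Order.join a b) = x a || x b,
      forall a b, x (Order.meet a b) = x a && x b,
      x Order.bottom = false & x Order.top = true].

(** the set of bounded-lattice homomorphisms A -> 2 inside {0,1}^A with the
    product topology; D(A) is the corresponding subspace *)
Definition hom_set (F : Type) (Fpos : F -> bool) (A : CornishAlg Fpos) :
    set {ptws ca_car A -> bool} := [set x | lat_hom2 x].
Arguments hom_set {F Fpos} A.

Definition Dcar (F : Type) (Fpos : F -> bool) (A : CornishAlg Fpos) : topologicalType :=
  set_type (hom_set A).

Definition Dle (F : Type) (Fpos : F -> bool) (A : CornishAlg Fpos) (x y : Dcar A) : Prop :=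
  forall a : ca_car A, (val x a : bool) ==> val y a.

Definition Dop_fun (F : Type) (Fpos : F -> bool) (A : CornishAlg Fpos) (f : F)
    (x : ca_car A -> bool) : ca_car A -> bool :=
  if Fpos f then (fun a => x (ca_op A f a)) else (fun a => ~~ x (ca_op A f a)).

Lemma Dop_fun_hom (F : Type) (Fpos : F -> bool) (A : CornishAlg Fpos) (f : F)
    (x : Dcar A) : Dop_fun f (val x) \in hom_set A.
Proof.
apply: mem_set; have := set_valP x; rewrite /hom_set /= => -[xj xm xb xt].
rewrite /Dop_fun; have := ca_op_hom A f.
case: (Fpos f) => -[hj hm hb ht]; split=> [a b|a b||].
- by rewrite hj xj.
- by rewrite hm xm.
- by rewrite hb xb.
- by rewrite ht xt.
- by rewrite hj xm negb_and.
- by rewrite hm xj negb_or.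
- by rewrite hb xt.
- by rewrite ht xb.
Qed.

Definition Dop (F : Type) (Fpos : F -> bool) (A : CornishAlg Fpos) (f : F) (x : Dcar A) :
    Dcar A := SigSub (Dop_fun_hom f x).

Definition is_morphism (F : Type) (Fpos : F -> bool) (A : CornishAlg Fpos)
    (Y : CornishSpace Fpos) (phi : Dcar A -> cs_car Y) : Prop :=
  [/\ continuous phi,
      (forall x y, Dle x y -> cs_le Y (phi x) (phi y)) &
      (forall f x, phi (Dop f x) = cs_op Y f (phi x))].

Definition D_substructure (F : Type) (Fpos : F -> bool) (A : CornishAlg Fpos)
    (S : set (Dcar A)) : Prop :=
  closed S /\ (forall f x, S x -> S (Dop f x)).

Definition surjective_map (T U : Type) (phi : T -> U) := forall y, exists x, phi x = y.

Definition jointly_surjective (T1 T2 U : Type) (phi1 : T1 -> U) (phi2 : T2 -> U) :=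
  forall y, (exists x, phi1 x = y) \/ (exists x, phi2 x = y).

Definition comparable_in (T : Type) (le : T -> T -> Prop) (a b : T) := le a b \/ le b a.

Definition ordered_disjoint_union (F : Type) (Fpos : F -> bool) (Y : CornishSpace Fpos)
    (Y1 Y2 : set (cs_car Y)) : Prop :=
  [/\ Y1 `&` Y2 = set0, Y1 `|` Y2 = [set: cs_car Y] &
      forall a b, Y1 a -> Y2 b -> ~ comparable_in (cs_le Y) a b].

(* Main.v *)
Require Import Defs.
From HB Require Import structures.
From mathcomp Require Import all_boot all_order all_algebra.
From mathcomp Require Import all_classical topology function_spaces subtype_topology.
From Stdlib Require List.
Set Implicit Arguments.
Unset Strict Implicit.
Unset Printing Implicit Defensive.
Import Order.TTheory.
Local Open Scope classical_set_scope.

Section Alg.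
Variables (F : Type) (Fpos : F -> bool) (A : CornishAlg Fpos).
Local Notation L := (ca_car A).

Lemma hom_of (h : Dcar A) : lat_hom2 (val h : L -> bool).
Proof. by have := set_valP h. Qed.

Lemma Dop_val (f : F) (h : Dcar A) (a : L) :
  val (Dop f h) a = (if Fpos f then val h (ca_op A f a) else ~~ val h (ca_op A f a)).
Proof. by rewrite /Dop /= /Dop_fun; case: (Fpos f). Qed.

Lemma val_op (f : F) (h : Dcar A) (a : L) :
  val h (ca_op A f a) = (if Fpos f then val (Dop f h) a else ~~ val (Dop f h) a).
Proof. by rewrite Dop_val; case: (Fpos f) => //; rewrite negbK. Qed.

Lemma Dcar_inj (h h' : Dcar A) : (forall a, val h a = val h' a) -> h = h'.
Proof. by move=> e; apply: val_inj; apply: funext. Qed.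

Lemma Dle_refl (h : Dcar A) : Dle h h.
Proof. by move=> a; apply/implyP. Qed.

Lemma Dle_trans (x y z : Dcar A) : Dle x y -> Dle y z -> Dle x z.
Proof.
move=> xy yz a; apply/implyP => xa.
by have/implyP := yz a; apply; have/implyP := xy a; apply.
Qed.

Lemma Dle_anti (x y : Dcar A) : Dle x y -> Dle y x -> x = y.
Proof.
move=> xy yx; apply: Dcar_inj => a.
by have := xy a; have := yx a; case: (val x a); case: (val y a).
Qed.

Lemma hom_bigjoin (h : Dcar A) (I : Type) (r : seq I) (P : pred I) (G : I -> L) :
  val h (\big[Order.join/Order.bottom]_(i <- r | P i) G i) =
  \big[orb/false]_(i <- r | P i) val h (G i).
Proof.
have [hj hm hb ht] := hom_of h.
by apply: (big_morph (val h : L -> bool)) => // a b; rewrite hj.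
Qed.

Lemma hom_bigmeet (h : Dcar A) (I : Type) (r : seq I) (P : pred I) (G : I -> L) :
  val h (\big[Order.meet/Order.top]_(i <- r | P i) G i) =
  \big[andb/true]_(i <- r | P i) val h (G i).
Proof.
have [hj hm hb ht] := hom_of h.
by apply: (big_morph (val h : L -> bool)) => // a b; rewrite hm.
Qed.

Definition repP (V : Dcar A -> bool) (g : {ffun L -> bool}) : bool :=
  `[< exists h : Dcar A, (forall b, val h b = g b) /\ V h >].

Definition rep (V : Dcar A -> bool) : L :=
  \big[Order.join/Order.bottom]_(g | repP V g)
     \big[Order.meet/Order.top]_(b | g b) b.

Lemma rep_ext (V V' : Dcar A -> bool) : V =1 V' -> rep V = rep V'.
Proof. by move=> e; have -> : V = V' by apply: funext. Qed.

Lemma repE (V : Dcar A -> bool) :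
  (forall h h', Dle h h' -> V h -> V h') -> forall h, val h (rep V) = V h.
Proof.
move=> Vmon h; rewrite /rep hom_bigjoin.
apply/idP/idP.
- rewrite big_orE => /existsP [g /andP [/asboolP [h' [eh' Vh']]]].
  rewrite hom_bigmeet big_andE => /forallP gh.
  apply: (Vmon h') => // b; rewrite eh'; apply/implyP => gb.
  by have := gh b; rewrite gb.
- move=> Vh; rewrite big_orE; apply/existsP; exists (finfun (val h)).
  apply/andP; split.
    by apply/asboolP; exists h; split=> // b; rewrite ffunE.
  rewrite hom_bigmeet big_andE; apply/forallP => b; apply/implyP.
  by rewrite ffunE.
Qed.
End Alg.


Section Sep.
Variables (F : Type) (Fpos : F -> bool) (A : CornishAlg Fpos).
Local Notation L := (ca_car A).
Local Open Scope order_scope.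

Lemma exists_min (P : pred L) (c : L) : P c ->
  exists j, P j /\ forall d, d < j -> ~~ P d.
Proof.
have : forall n (c : L), (#|[pred d : L | (d < c)%O]| < n)%N -> P c ->
  exists j, P j /\ forall d, d < j -> ~~ P d.
  elim=> [//|n IH] c' hc Pc.
  case: (boolP [exists d, (d < c') && P d]).
    move=> /existsP [d /andP [dc Pd]]; apply: (IH d) => //.
    rewrite -ltnS; apply: leq_trans hc; rewrite ltnS; apply: proper_card; apply/properP; split.
      by apply/fintype.subsetP => e; rewrite !inE => ed; apply: lt_trans ed dc.
    by exists d; rewrite !inE ?ltxx.
  move=> /existsPn H; exists c'; split => // d dc.
  by have := H d; rewrite dc.
by move=> H Pc; apply: (H _ c).
Qed.

Lemma sep_le (a b : L) : ~~ (a <= b) -> exists h : Dcar A, val h a && ~~ val h b.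
Proof.
move=> nab.
have Pa : (a <= a) && ~~ (a <= b) by rewrite lexx.
have [j [/andP [ja jb] jmin]] := @exists_min (fun c => (c <= a) && ~~ (c <= b)) a Pa.
have jmin' : forall d, d < j -> d <= b.
  move=> d dj; have := jmin d dj; rewrite negb_and negbK.
  by case/orP=> // /negP []; apply: le_trans (ltW dj) ja.
have hom : lat_hom2 ((fun c => j <= c) : {ptws L -> bool}).
  split.
  - move=> c d; apply/idP/idP; last first.
      by case/orP => h; [apply: le_trans h (leUl _ _)|apply: le_trans h (leUr _ _)].
    move=> jcd.
    have ej : j = (j `&` c) `|` (j `&` d) by rewrite -meetUr; apply/esym/meet_l.
    case: (boolP (j <= c)) => //= jc; apply: contraNT jb => jd.
    rewrite ej leUx !jmin' //.
      by rewrite lt_neqAle leIl andbT; apply: contraNneq jd => <-; rewrite leIr.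
    by rewrite lt_neqAle leIl andbT; apply: contraNneq jc => <-; rewrite leIr.
  - by move=> c d; rewrite lexI.
  - apply: negbTE; apply: contra jb => j0.
    by apply: le_trans j0 (le0x _).
  - by rewrite lex1.
exists (SigSub (mem_set hom)) => /=.
by rewrite ja.
Qed.

Lemma sep (a b : L) : a <> b -> exists h : Dcar A, val h a != val h b.
Proof.
move=> nab; case: (boolP (a <= b)) => ab.
  have ba : ~~ (b <= a) by apply/negP => ba; apply: nab; apply/le_anti; rewrite ab ba.
  by have [h /andP [hb ha]] := sep_le ba; exists h; rewrite (negbTE ha) hb.
by have [h /andP [ha hb]] := sep_le ab; exists h; rewrite (negbTE hb) ha.
Qed.

Lemma sep_eq (a b : L) : (forall h : Dcar A, val h a = val h b) -> a = b.
Proof.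
move=> H; apply: contrapT => nab; have [h] := sep nab.
by rewrite H eqxx.
Qed.
End Sep.


Section Terms.
Variables (F : Type) (Fpos : F -> bool).

Lemma locality (A : CornishAlg Fpos) (S : set (Dcar A))
  (closS : forall f x, S x -> S (Dop f x)) (V : Type) (e e' : V -> ca_car A) (t : term F V) :
  (forall h v, S h -> val h (e v) = val h (e' v)) ->
  forall h, S h -> val h (teval e t) = val h (teval e' t).
Proof.
move=> He; elim: t => [v|t1 IH1 t2 IH2|t1 IH1 t2 IH2|||f t IH] h Sh /=.
- exact: He.
- by have [hj _ _ _] := hom_of h; rewrite !hj IH1 ?IH2.
- by have [_ hm _ _] := hom_of h; rewrite !hm IH1 ?IH2.
- by [].
- by [].
- by rewrite !val_op IH //; apply: closS.
Qed.

Fixpoint Psi (Y : CornishSpace Fpos) (V : Type) (U : V -> cs_car Y -> bool)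
  (t : term F V) (y : cs_car Y) : bool :=
  match t with
  | tvar v => U v y
  | tjoin t1 t2 => Psi U t1 y || Psi U t2 y
  | tmeet t1 t2 => Psi U t1 y && Psi U t2 y
  | tbot => false
  | ttop => true
  | tapp f t1 => if Fpos f then Psi U t1 (cs_op Y f y) else ~~ Psi U t1 (cs_op Y f y)
  end.

Lemma Psi_mono (Y : CornishSpace Fpos) (V : Type) (U : V -> cs_car Y -> bool) :
  (forall v y y', cs_le Y y y' -> U v y -> U v y') ->
  forall t y y', cs_le Y y y' -> Psi U t y -> Psi U t y'.
Proof.
move=> HU; elim => [v|t1 IH1 t2 IH2|t1 IH1 t2 IH2|||f t IH] y y' le /=.
- exact: HU.
- by case/orP => [/(IH1 _ _ le) ->|/(IH2 _ _ le) ->] //; rewrite orbT.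
- by case/andP => /(IH1 _ _ le) -> /(IH2 _ _ le) ->.
- by [].
- by [].
- have := cs_op_mono f le; case: (Fpos f) => le'.
    exact: IH.
  by apply: contra; apply: IH.
Qed.

Lemma Psi_nat (A : CornishAlg Fpos) (Y : CornishSpace Fpos) (V : Type)
  (U : V -> cs_car Y -> bool) (phi : Dcar A -> cs_car Y) (e : V -> ca_car A) :
  (forall f x, phi (Dop f x) = cs_op Y f (phi x)) ->
  (forall h v, val h (e v) = U v (phi h)) ->
  forall t h, Psi U t (phi h) = val h (teval e t).
Proof.
move=> Hphi He; elim => [v|t1 IH1 t2 IH2|t1 IH1 t2 IH2|||f t IH] h /=.
- by rewrite He.
- by have [hj _ _ _] := hom_of h; rewrite hj IH1 IH2.
- by have [_ hm _ _] := hom_of h; rewrite hm IH1 IH2.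
- by have [_ _ hb _] := hom_of h; rewrite hb.
- by have [_ _ _ ht] := hom_of h; rewrite ht.
- by rewrite val_op -Hphi IH.
Qed.
End Terms.


Lemma env3P (T : Type) (P : T -> Prop) (x y z : T) (v : 'I_3) :
  P x -> P y -> P z -> P (env3 x y z v).
Proof. by case: v => [[|[|[|//]]]] //=. Qed.

Lemma env3_0 (T : Type) (x y z : T) : env3 x y z (@Ordinal 3 0 isT) = x. Proof. by []. Qed.
Lemma env3_1 (T : Type) (x y z : T) : env3 x y z (@Ordinal 3 1 isT) = y. Proof. by []. Qed.
Lemma env3_2 (T : Type) (x y z : T) : env3 x y z (@Ordinal 3 2 isT) = z. Proof. by []. Qed.

Section OneTwo.
Variables (F : Type) (Fpos : F -> bool).

Definition mono_pred (Y : CornishSpace Fpos) (U : cs_car Y -> bool) :=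
  forall y y', cs_le Y y y' -> U y -> U y'.

Lemma mono_comp (A : CornishAlg Fpos) (Y : CornishSpace Fpos) (phi : Dcar A -> cs_car Y)
  (U : cs_car Y -> bool) : is_morphism phi -> mono_pred U ->
  forall h h', Dle h h' -> U (phi h) -> U (phi h').
Proof. by case=> _ Hle _ HU h h' hh'; apply: HU; apply: Hle. Qed.

Lemma Kside (A : CornishAlg Fpos) (t : term F 'I_3) (dA : is_discriminator_term A t)
  (Y : CornishSpace Fpos) (phi : Dcar A -> cs_car Y) (m : is_morphism phi)
  (Ua Ub Uc : cs_car Y -> bool) (ma : mono_pred Ua) (mb : mono_pred Ub) (mc : mono_pred Uc) :
  forall h, Psi (env3 Ua Ub Uc) t (phi h) =
    if rep (fun h => Ua (phi h)) == rep (fun h => Ub (phi h)) then Uc (phi h) else Ua (phi h).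
Proof.
move=> h.
set a := rep (fun h => Ua (phi h)); set b := rep (fun h => Ub (phi h)).
set c := rep (fun h => Uc (phi h)).
have Ea : forall h, val h a = Ua (phi h) by apply: repE; apply: mono_comp.
have Eb : forall h, val h b = Ub (phi h) by apply: repE; apply: mono_comp.
have Ec : forall h, val h c = Uc (phi h) by apply: repE; apply: mono_comp.
have [_ _ Hop] := m.
rewrite (@Psi_nat _ _ A Y _ _ phi (env3 a b c)) //; last first.
  by move=> h' [[|[|[|//]]] ?] /=; rewrite ?Ea ?Eb ?Ec.
by rewrite dA; case: (a == b).
Qed.
End OneTwo.


Section OneTwoB.
Variables (F : Type) (Fpos : F -> bool).
Variables (A A' : CornishAlg Fpos) (t : term F 'I_3).
Hypotheses (dA : is_discriminator_term A t) (dA' : is_discriminator_term A' t).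
Variables (Y : CornishSpace Fpos) (phi1 : Dcar A -> cs_car Y) (phi2 : Dcar A' -> cs_car Y).
Hypotheses (m1 : is_morphism phi1) (m2 : is_morphism phi2).

Definition Ub_of (y : cs_car Y) : cs_car Y -> bool := fun v => `[< cs_le Y y v >].
Definition Ua_of (y : cs_car Y) : cs_car Y -> bool :=
  fun v => `[< exists w, (exists h, phi1 h = w) /\ cs_le Y y w /\ cs_le Y w v >].

Lemma Ub_mono y : mono_pred (Ub_of y).
Proof. by move=> u v uv /asboolP yu; apply/asboolP; apply: cs_le_trans yu uv. Qed.

Lemma Ua_mono y : mono_pred (Ua_of y).
Proof.
move=> u v uv /asboolP [w [iw [yw wu]]]; apply/asboolP; exists w; split => //.
by split => //; apply: cs_le_trans wu uv.
Qed.

Lemma const_mono (b : bool) : mono_pred (fun _ : cs_car Y => b).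
Proof. by []. Qed.

Lemma Kpair (r : Dcar A') (nr : ~ exists h, phi1 h = phi2 r)
  (Uc : cs_car Y -> bool) (mc : mono_pred Uc) :
  (forall h, Psi (env3 (Ua_of (phi2 r)) (Ub_of (phi2 r)) Uc) t (phi1 h) = Uc (phi1 h)) /\
  (forall h, Psi (env3 (Ua_of (phi2 r)) (Ub_of (phi2 r)) Uc) t (phi2 h) = Ua_of (phi2 r) (phi2 h)).
Proof.
set y := phi2 r.
have agree : forall h, Ua_of y (phi1 h) = Ub_of y (phi1 h).
  move=> h; apply/asboolP/asboolP.
    by move=> [w [_ [yw wu]]]; apply: cs_le_trans yw wu.
  by move=> yh; exists (phi1 h); split; [exists h|split=> //; apply: cs_le_refl].
have Uay : Ua_of y y = false.
  apply/asboolP => -[w [[h hw] [yw wy]]]; apply: nr; exists h.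
  by rewrite hw; apply: cs_le_anti.
have Uby : Ub_of y y = true by apply/asboolP; apply: cs_le_refl.
split=> h.
  rewrite (Kside dA m1 (@Ua_mono y) (@Ub_mono y) mc).
  by rewrite (rep_ext agree) eqxx.
rewrite (Kside dA' m2 (@Ua_mono y) (@Ub_mono y) mc).
case: eqP => // E; exfalso.
have Ea := @repE _ _ A' (fun h => Ua_of y (phi2 h)) (mono_comp m2 (@Ua_mono y)) r.
have Eb := @repE _ _ A' (fun h => Ub_of y (phi2 h)) (mono_comp m2 (@Ub_mono y)) r.
by move: Ea Eb; rewrite E => ->; rewrite -/y Uay Uby.
Qed.

Lemma no_meet (r : Dcar A') (nr : ~ exists h, phi1 h = phi2 r) :
  forall p q, phi1 p <> phi2 q.
Proof.
move=> p q epq.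
have [H1 H2] := Kpair nr (@const_mono (~~ Ua_of (phi2 r) (phi1 p))).
have e1 := H1 p; have e2 := H2 q; rewrite -epq e1 in e2.
by move: e2; case: (Ua_of _ _).
Qed.

Lemma no_le (q : Dcar A') (nq : ~ exists h, phi1 h = phi2 q) :
  forall p, ~ cs_le Y (phi1 p) (phi2 q).
Proof.
move=> p le.
have [H1 H2] := Kpair nq (@const_mono true).
have mU : forall v y y', cs_le Y y y' ->
    env3 (Ua_of (phi2 q)) (Ub_of (phi2 q)) (fun _ => true) v y ->
    env3 (Ua_of (phi2 q)) (Ub_of (phi2 q)) (fun _ => true) v y'.
  move=> v y y' yy'; case: v => [[|[|[|//]]] ?] /=.
  - exact: Ua_mono.
  - exact: Ub_mono.
  - by [].
have := Psi_mono mU (t:=t) le; rewrite H1 H2 => /(_ isT) /asboolP [w [[h hw] [yw wy]]].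
apply: nq; exists h; rewrite hw; apply: cs_le_anti => //.
Qed.
End OneTwoB.


Section OneTwoC.
Variables (F : Type) (Fpos : F -> bool).

Lemma one_to_two (A A' : CornishAlg Fpos) (t : term F 'I_3)
  (dA : is_discriminator_term A t) (dA' : is_discriminator_term A' t)
  (Y : CornishSpace Fpos) (phi1 : Dcar A -> cs_car Y) (phi2 : Dcar A' -> cs_car Y) :
  is_morphism phi1 -> is_morphism phi2 -> jointly_surjective phi1 phi2 ->
  ordered_disjoint_union (range phi1) (range phi2) \/
  (surjective_map phi1 /\ surjective_map phi2).
Proof.
move=> m1 m2 js.
case: (pselect (surjective_map phi1 /\ surjective_map phi2)) => [H|ns]; first by right.
left.
have D : forall p q, phi1 p <> phi2 q.
  case: (pselect (surjective_map phi1)) => s1.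
    have ns2 : ~ surjective_map phi2 by move=> s2; apply: ns.
    have [y ny] : exists y, ~ exists x, phi2 x = y.
      by apply: contrapT => H; apply: ns2 => y; apply: contrapT => H'; apply: H; exists y.
    have [[r ry]|[x xy]] := js y; last by exfalso; apply: ny; exists x.
    move=> p q e.
    have nr : ~ exists h, phi2 h = phi1 r by rewrite ry.
    exact: (no_meet dA' dA m2 m1 nr (esym e)).
  have [y ny] : exists y, ~ exists x, phi1 x = y.
    by apply: contrapT => H; apply: s1 => y; apply: contrapT => H'; apply: H; exists y.
  have [[x xy]|[r ry]] := js y; first by exfalso; apply: ny; exists x.
  have nr : ~ exists h, phi1 h = phi2 r by rewrite ry.
  exact: (no_meet dA dA' m1 m2 nr).
split.
- by apply/seteqP; split => y // [[p _ <-] [q _ e]]; apply: (D p q (esym e)).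
- apply/seteqP; split => y // _; case: (js y) => [[x <-]|[x <-]].
    by left; exists x.
  by right; exists x.
- move=> a b [p _ <-] [q _ <-] [le|le].
    have nq : ~ exists h, phi1 h = phi2 q by move=> [h e]; apply: (D h q e).
    exact: (no_le dA dA' m1 m2 nq le).
  have np : ~ exists h, phi2 h = phi1 p by move=> [h e]; apply: (D p h (esym e)).
  exact: (no_le dA' dA m2 m1 np le).
Qed.

Lemma one_simple (A : CornishAlg Fpos) (t : term F 'I_3) (dA : is_discriminator_term A t)
  (S : set (Dcar A)) : D_substructure S -> S <> set0 -> S = setT.
Proof.
move=> [_ closS] S0.
have [s Ss] : exists s, S s.
  by apply: contrapT => H; apply: S0; apply/seteqP; split => y // Sy; apply: H; exists y.
apply/seteqP; split => // x _; apply: contrapT => nSx.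
pose Vb := fun h : Dcar A => `[< Dle x h >].
pose Va := fun h : Dcar A => `[< exists w, S w /\ Dle x w /\ Dle w h >].
have mb : forall h h', Dle h h' -> Vb h -> Vb h'.
  by move=> h h' hh' /asboolP xh; apply/asboolP; apply: Dle_trans xh hh'.
have ma : forall h h', Dle h h' -> Va h -> Va h'.
  move=> h h' hh' /asboolP [w [Sw [xw wh]]]; apply/asboolP; exists w.
  by split => //; split => //; apply: Dle_trans wh hh'.
set a := rep Va; set b := rep Vb.
have Ea := repE ma; have Eb := repE mb.
have agree : forall h, S h -> val h a = val h b.
  move=> h Sh; rewrite Ea Eb; apply/asboolP/asboolP.
    by move=> [w [_ [xw wh]]]; apply: Dle_trans xw wh.
  by move=> xh; exists h; split => //; split => //; apply: Dle_refl.
have nab : a != b.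
  apply/eqP => eab; have := Ea x; have := Eb x; rewrite -/a -/b eab => ->.
  have -> : Vb x = true by apply/asboolP; apply: Dle_refl.
  move=> /esym /asboolP [w [Sw [xw wx]]]; apply: nSx.
  by have <- : w = x by apply: Dle_anti.
pose c : ca_car A := if val s a then Order.bottom else Order.top.
have Hloc : forall h v, S h -> val h (env3 a b c v) = val h (env3 a a c v).
  move=> h [[|[|[|//]]] ?] Sh //=.
  by rewrite agree.
have := @locality _ _ A S closS _ (env3 a b c) (env3 a a c) t Hloc s Ss.
rewrite !dA eqxx (negbTE nab).
have [_ _ hb ht] := hom_of s.
by rewrite /c; case: (val s a); rewrite ?hb ?ht.
Qed.
End OneTwoC.


Section Fin.
Variables (F : Type) (Fpos : F -> bool) (A : CornishAlg Fpos).
Local Notation L := (ca_car A).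

Lemma Dcar_finite : finite_set [set: Dcar A].
Proof.
case: (pselect (exists h : Dcar A, True)) => [[x0 _]|N]; last first.
  have -> : [set: Dcar A] = set0 by apply/seteqP; split => // h _; apply: N; exists h.
  exact: finite_set0.
pose G (g : {ffun L -> bool}) : Dcar A :=
  match pselect (hom_set A ((fun a => g a) : {ptws L -> bool})) with
  | left pf => SigSub (mem_set pf)
  | right _ => x0
  end.
apply: (@sub_finite_set _ _ (G @` setT)); last by apply: finite_image; exact: finite_finset.
move=> h _; exists (finfun (val h)) => //.
rewrite /G; case: pselect => [pf|npf].
  by apply: Dcar_inj => a /=; rewrite ffunE.
exfalso; apply: npf.
have -> : ((fun a => finfun (val h) a) : {ptws L -> bool}) = val h.
  by apply: funext => a; rewrite ffunE.
exact: set_valP.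
Qed.

Lemma set_val_cont : continuous (set_val : Dcar A -> {ptws L -> bool}).
Proof. exact: initial_continuous. Qed.

Lemma Dcar_accessible : accessible_space (Dcar A).
Proof.
move=> x y nxy.
have [a na] : exists a, val x a != val y a.
  apply: contrapT => H; move/eqP: nxy; apply; apply: Dcar_inj => a.
  by apply/eqP; apply: contrapT => H'; apply: H; exists a; apply/negP.
exists ((set_val : Dcar A -> {ptws L -> bool}) @^-1` ((proj a) @^-1` [set val x a])).
split.
- have := set_val_cont; rewrite continuousP; apply.
  have pc : continuous (fun g : {ptws L -> bool} => g a).
    exact: (@proj_continuous L (fun _ => bool) a).
  move: pc; rewrite continuousP; apply.
  exact: discrete_open.
- by rewrite in_setE.
- rewrite in_setE /= => e; move: na; rewrite /proj in e.
  have E : \val x a = \val y a by rewrite /= -e.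
  by rewrite E eqxx.
Qed.

Lemma Dcar_closed (S : set (Dcar A)) : closed S.
Proof.
have := proj1 (@accessible_finite_set_closed (Dcar A)) Dcar_accessible S.
by apply; apply: sub_finite_set Dcar_finite.
Qed.

Lemma Dcar_open (S : set (Dcar A)) : open S.
Proof. by rewrite -closedC; apply: Dcar_closed. Qed.

Lemma Dcar_cont (T : topologicalType) (g : Dcar A -> T) : continuous g.
Proof. by apply/continuousP => U _; apply: Dcar_open. Qed.
End Fin.


Section Prof.
Variables (F : Type) (Fpos : F -> bool) (K Z : Type) (prof : Z -> K -> bool)
  (op : F -> (K -> bool) -> (K -> bool)).
Hypothesis finZ : finite_set [set: Z].
Hypothesis opZ : forall f z, exists z', prof z' = op f (prof z).
Hypothesis opm : forall f (p q : K -> bool), (forall k, p k -> q k) ->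
  forall k, if Fpos f then (op f p k -> op f q k) else (op f q k -> op f p k).

Definition PT := discrete_topology (set_type (range prof)).

Lemma op_in f (x : PT) : range prof (op f (val x)).
Proof.
have [z _ e] := set_valP x; have [z' e'] := opZ f z.
by exists z' => //; rewrite e' e.
Qed.

Definition pop f (x : PT) : PT := SigSub (mem_set (op_in f x)).
Definition ple (x y : PT) : Prop := forall k, val x k -> val y k.
Definition mkpt (z : Z) : PT := SigSub (mem_set (ex_intro2 _ _ z I erefl : range prof (prof z))).

Lemma val_mkpt z : val (mkpt z) = prof z. Proof. by []. Qed.
Lemma val_pop f x : val (pop f x) = op f (val x). Proof. by []. Qed.

Lemma PT_inj (x y : PT) : val x = val y -> x = y.
Proof. exact: val_inj. Qed.

Lemma ple_refl x : ple x x. Proof. by []. Qed.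
Lemma ple_anti x y : ple x y -> ple y x -> x = y.
Proof.
move=> xy yx; apply: PT_inj; apply: funext => k.
by apply/idP/idP; [apply: xy|apply: yx].
Qed.
Lemma ple_trans x y z : ple x y -> ple y z -> ple x z.
Proof. by move=> xy yz k /xy /yz. Qed.

Lemma PT_finite : finite_set [set: PT].
Proof.
apply: (@sub_finite_set _ _ (mkpt @` setT)); last exact: finite_image.
move=> x _; have [z _ e] := set_valP x; exists z => //.
by apply: PT_inj; rewrite val_mkpt e.
Qed.

Lemma PT_compact : compact [set: PT].
Proof. exact: finite_compact PT_finite. Qed.

Lemma PT_priestley x y : ~ ple x y ->
  exists U : set PT, [/\ clopen U, up_set ple U, U x & ~ U y].
Proof.
move=> nxy.
have [k [xk nyk]] : exists k, val x k /\ ~ val y k.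
  apply: contrapT => H; apply: nxy => k xk; apply: contrapT => nyk; apply: H.
  by exists k.
exists [set u : PT | val u k]; split => //.
- by split; [apply: discrete_open|apply: discrete_closed].
- by move=> u v uk uv; apply: uv.
Qed.

Lemma pop_cont f : continuous (pop f).
Proof. by apply/continuousP => U _; apply: discrete_open. Qed.

Lemma pop_mono f x y : ple x y ->
  if Fpos f then ple (pop f x) (pop f y) else ple (pop f y) (pop f x).
Proof.
move=> xy; have := opm f xy; case: (Fpos f) => H k; exact: H.
Qed.

Definition ProfSpace : CornishSpace Fpos :=
  @Build_CornishSpace F Fpos PT ple ple_refl ple_anti ple_trans PT_compact
    PT_priestley pop pop_cont pop_mono.
End Prof.


Section JM.
Variables (F V : Type) (Z : eqType) (ev : term F V -> Z -> bool).
Hypotheses (evj : forall a b z, ev (tjoin a b) z = ev a z || ev b z)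
  (evm : forall a b z, ev (tmeet a b) z = ev a z && ev b z)
  (evb : forall z, ev (@tbot F V) z = false) (evt : forall z, ev (@ttop F V) z = true).

Lemma jm (T : Z -> bool) (s : seq Z) :
  (forall p q, T p -> ~~ T q -> exists t, ev t p && ~~ ev t q) ->
  exists t, forall z, z \in s -> ev t z = T z.
Proof.
move=> Hsep.
have step1 : forall p, T p -> forall l : seq Z,
    exists t, ev t p /\ forall q, q \in l -> ~~ T q -> ~~ ev t q.
  move=> p Tp; elim=> [|q l [t [tp tl]]].
    by exists (@ttop F V); rewrite evt.
  case: (boolP (T q)) => Tq.
    exists t; split => // q'; rewrite inE => /orP [/eqP -> |]; first by rewrite Tq.
    exact: tl.
  have [u /andP [up uq]] := Hsep p q Tp Tq.
  exists (tmeet t u); rewrite evm tp up; split => // q'.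
  rewrite inE evm => /orP [/eqP -> _|/tl H /H]; first by rewrite (negbTE uq) andbF.
  by move=> /negbTE ->.
have step2 : forall l : seq Z, exists t, (forall z, z \in s -> ev t z -> T z) /\
    (forall z, z \in l -> T z -> ev t z).
  elim=> [|p l [t [t1 t2]]].
    by exists (@tbot F V); split => // z _; rewrite evb.
  case: (boolP (T p)) => Tp.
    have [u [up us]] := step1 p Tp s.
    exists (tjoin t u); split.
      move=> z zs; rewrite evj => /orP [/(t1 _ zs) //|uz].
      by apply: contraLR uz => /(us _ zs).
    move=> z; rewrite inE evj => /orP [/eqP -> _|/t2 H /H ->]; first by rewrite up orbT.
    by [].
  exists t; split => // z; rewrite inE => /orP [/eqP -> |/t2 //].
  by rewrite (negbTE Tp).
have [t [t1 t2]] := step2 s.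
exists t => z zs; apply/idP/idP; [exact: t1|exact: t2].
Qed.
End JM.

Section Core.
Variables (F : Type) (Fpos : F -> bool) (A A' : CornishAlg Fpos)
  (x z : ca_car A) (x' y' z' : ca_car A').

Definition Zc := (Dcar A + Dcar A')%type.

Definition cprof (p : Zc) : term F 'I_3 -> bool :=
  match p with
  | inl h => fun t => val h (teval (env3 x x z) t)
  | inr h => fun t => val h (teval (env3 x' y' z') t)
  end.

Definition cop (f : F) (pi : term F 'I_3 -> bool) : term F 'I_3 -> bool :=
  fun t => if Fpos f then pi (tapp f t) else ~~ pi (tapp f t).

Lemma Zc_finite : finite_set [set: Zc].
Proof.
have -> : [set: Zc] = inl @` [set: Dcar A] `|` inr @` [set: Dcar A'].
  apply/seteqP; split => // -[h|h] _; [left|right]; by exists h.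
by rewrite finite_setU; split; apply: finite_image; apply: Dcar_finite.
Qed.

Lemma cprofl f h : cprof (inl (Dop f h)) = cop f (cprof (inl h)).
Proof. by apply: funext => t; rewrite /= /Dop_fun /cop /=; case: (Fpos f). Qed.
Lemma cprofr f h : cprof (inr (Dop f h)) = cop f (cprof (inr h)).
Proof. by apply: funext => t; rewrite /= /Dop_fun /cop /=; case: (Fpos f). Qed.

Lemma copZ f p : exists p', cprof p' = cop f (cprof p).
Proof. by case: p => h; [exists (inl (Dop f h)); rewrite cprofl|exists (inr (Dop f h)); rewrite cprofr]. Qed.

Lemma copm f (p q : term F 'I_3 -> bool) : (forall k, p k -> q k) ->
  forall k, if Fpos f then (cop f p k -> cop f q k) else (cop f q k -> cop f p k).
Proof.
move=> pq k; rewrite /cop; case: (Fpos f); first exact: pq.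
by apply: contra; apply: pq.
Qed.

Definition CY : CornishSpace Fpos := ProfSpace Zc_finite copZ copm.

Definition cphi1 (h : Dcar A) : cs_car CY := mkpt cprof (inl h).
Definition cphi2 (h : Dcar A') : cs_car CY := mkpt cprof (inr h).

Lemma cphi1_mor : is_morphism cphi1.
Proof.
split.
- exact: Dcar_cont.
- move=> h h' hh' t /=; have := hh' (teval (env3 x x z) t).
  by move=> /implyP.
- by move=> f h; apply: PT_inj; exact: cprofl.
Qed.

Lemma cphi2_mor : is_morphism cphi2.
Proof.
split.
- exact: Dcar_cont.
- move=> h h' hh' t /=; have := hh' (teval (env3 x' y' z') t).
  by move=> /implyP.
- by move=> f h; apply: PT_inj; exact: cprofr.
Qed.

Lemma cphi_js : jointly_surjective cphi1 cphi2.
Proof.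
move=> y; have [[h|h] _ e] := set_valP y.
  by left; exists h; apply: PT_inj.
by right; exists h; apply: PT_inj.
Qed.

Lemma allmatch_contra : x' != y' -> ~ (forall q, exists p, cphi1 p = cphi2 q).
Proof.
move=> nxy H; move/eqP: nxy; apply; apply: (sep_eq (A := A')) => q.
have [p e] := H q.
have e' : cprof (inl p) = cprof (inr q) by have := congr1 val e.
have e0 := congr1 (fun g => g (@tvar F _ (@Ordinal 3 0 isT))) e'.
have e1 := congr1 (fun g => g (@tvar F _ (@Ordinal 3 1 isT))) e'.
by move: e0 e1 => /= <- <-.
Qed.

Lemma core_term :
  (forall p q, ~ cs_le CY (cphi1 p) (cphi2 q)) ->
  (forall p q, ~ cs_le CY (cphi2 q) (cphi1 p)) ->
  exists t, teval (env3 x x z) t = z /\ teval (env3 x' y' z') t = x'.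
Proof.
move=> N1 N2.
have [s es] := proj1 (finite_seqP _) Zc_finite.
pose T (p : Zc) : bool := match p with inl h => val h z | inr h => val h x' end.
pose ev := fun (t : term F 'I_3) (p : Zc) => cprof p t.
have evj : forall a b p, ev (tjoin a b) p = ev a p || ev b p.
  by move=> a b [h|h]; rewrite /ev /=; have [hj _ _ _] := hom_of h; rewrite hj.
have evm : forall a b p, ev (tmeet a b) p = ev a p && ev b p.
  by move=> a b [h|h]; rewrite /ev /=; have [_ hm _ _] := hom_of h; rewrite hm.
have evb : forall p, ev (@tbot F 'I_3) p = false.
  by move=> [h|h]; rewrite /ev /=; have [_ _ hb _] := hom_of h; rewrite hb.
have evt : forall p, ev (@ttop F 'I_3) p = true.
  by move=> [h|h]; rewrite /ev /=; have [_ _ _ ht] := hom_of h; rewrite ht.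
have Hsep : forall p q, T p -> ~~ T q -> exists t, ev t p && ~~ ev t q.
  move=> [p|p] [q|q] /= Tp Tq.
  + by exists (@tvar F _ (@Ordinal 3 2 isT)); rewrite /ev /= Tp.
  + have : ~ cs_le CY (cphi1 p) (cphi2 q) := N1 p q.
    move=> H; apply: contrapT => H'; apply: H => t /= pt.
    by apply: contrapT => qt; apply: H'; exists t; rewrite /ev pt; apply/negP.
  + have : ~ cs_le CY (cphi2 p) (cphi1 q) := N2 q p.
    move=> H; apply: contrapT => H'; apply: H => t /= pt.
    by apply: contrapT => qt; apply: H'; exists t; rewrite /ev pt; apply/negP.
  + by exists (@tvar F _ (@Ordinal 3 0 isT)); rewrite /ev /= Tp.
have [t Ht] := jm evj evm evb evt s Hsep.
exists t; split.
- apply: (sep_eq (A := A)) => h.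
  have -> : val h (teval (env3 x x z) t) = ev t (inl h) by [].
  rewrite Ht //; have : [set` s] (inl h) by rewrite -es.
  by [].
- apply: (sep_eq (A := A')) => h.
  have -> : val h (teval (env3 x' y' z') t) = ev t (inr h) by [].
  rewrite Ht //; have : [set` s] (inr h) by rewrite -es.
  by [].
Qed.
End Core.


Lemma med_eq (d : Order.disp_t) (L : finTBDistrLatticeType d) (a b c v : L) :
  (a = v /\ b = v) \/ (b = v /\ c = v) \/ (a = v /\ c = v) ->
  Order.join (Order.join (Order.meet a b) (Order.meet b c)) (Order.meet a c) = v.
Proof.
case=> [[-> ->]|[[-> ->]|[-> ->]]]; apply/le_anti/andP; split; rewrite ?leUx ?lexI ?leIl ?leIr ?lexx //=.
- by apply: le_trans (leUl _ _); apply: le_trans (leUl _ _); rewrite lexI lexx.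
- by apply: le_trans (leUl _ _); apply: le_trans (leUr _ _); rewrite lexI lexx.
- by apply: le_trans (leUr _ _); rewrite lexI lexx.
Qed.

Lemma maj (T C : Type) (good : T -> C -> Prop) (med : T -> T -> T -> T)
  (Hmed : forall t1 t2 t3 c, (good t1 c /\ good t2 c) \/ (good t2 c /\ good t3 c) \/
     (good t1 c /\ good t3 c) -> good (med t1 t2 t3) c) (t0 : T) (l : seq C) :
  (forall c d, List.In c l -> List.In d l -> exists t, good t c /\ good t d) ->
  exists t, forall c, List.In c l -> good t c.
Proof.
have : forall n (l : seq C), (size l <= n)%N ->
  (forall c d, List.In c l -> List.In d l -> exists t, good t c /\ good t d) ->
  exists t, forall c, List.In c l -> good t c; last by move=> H; apply: (H (size l)).
elim=> [|n IH] [|c [|d [|e r]]] //= sz H.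
- by exists t0.
- by exists t0.
- have [t [tc _]] := H c c (or_introl erefl) (or_introl erefl).
  by exists t => c' [<-|].
- have [t [tc td]] := H c d (or_introl erefl) (or_intror (or_introl erefl)).
  by exists t => c' [<-|[<-|]].
- have [t1 H1] := IH (d :: e :: r) sz (fun c' d' hc hd => H c' d' (or_intror hc) (or_intror hd)).
  have [t2 H2] := IH (c :: e :: r) sz (fun c' d' hc hd => H c' d'
     ltac:(simpl in *; tauto) ltac:(simpl in *; tauto)).
  have [t3 H3] := IH (c :: d :: r) sz (fun c' d' hc hd => H c' d'
     ltac:(simpl in *; tauto) ltac:(simpl in *; tauto)).
  exists (med t1 t2 t3) => c' hc; apply: Hmed; simpl in *.
  case: hc => [<-|[<-|[<-|hr]]].
  + by right; left; split; [apply: H2|apply: H3]; left.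
  + by right; right; split; [apply: H1; left|apply: H3; right; left].
  + by left; split; [apply: H1; right; left|apply: H2; right; left].
  + by left; split; [apply: H1; right; right|apply: H2; right; right].
Qed.

Lemma mem_In (T : eqType) (x : T) (s : seq T) : x \in s -> List.In x s.
Proof.
elim: s => //= y s IH; rewrite inE => /orP [/eqP ->|/IH]; [left|right] => //.
Qed.


Section Final.
Variables (F : Type) (Fpos : F -> bool) (I : finType) (B : I -> CornishAlg Fpos).

Definition PairProp := forall i j (x z : ca_car (B i)) (x' y' z' : ca_car (B j)),
  x' != y' -> exists t : term F 'I_3,
    teval (env3 x x z) t = z /\ teval (env3 x' y' z') t = x'.

Definition Coord := {i : I & (ca_car (B i) * ca_car (B i) * ca_car (B i))%type}.

Definition good (t : term F 'I_3) (c : Coord) : Prop :=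
  let: existT i p := c in let: (x, y, z) := p in
  teval (env3 x y z) t = (if x == y then z else x).

Definition tmed (t1 t2 t3 : term F 'I_3) : term F 'I_3 :=
  tjoin (tjoin (tmeet t1 t2) (tmeet t2 t3)) (tmeet t1 t3).

Lemma pair_to_one : PairProp ->
  (forall i, quasi_primal (B i)) /\ (exists t : term F 'I_3, forall i, is_discriminator_term (B i) t).
Proof.
move=> HP.
pose l : seq Coord := List.flat_map (fun i => List.map
   (fun p => existT (fun i => (ca_car (B i) * ca_car (B i) * ca_car (B i))%type) i p)
   (index_enum (ca_car (B i) * ca_car (B i) * ca_car (B i))%type)) (index_enum I).
have Hmed : forall t1 t2 t3 c, (good t1 c /\ good t2 c) \/ (good t2 c /\ good t3 c) \/
     (good t1 c /\ good t3 c) -> good (tmed t1 t2 t3) c.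
  by move=> t1 t2 t3 [i [[x y] z]] /= H; apply: med_eq.
have Hpair : forall c d, List.In c l -> List.In d l -> exists t, good t c /\ good t d.
  move=> [i [[x y] z]] [j [[x' y'] z']] _ _ /=.
  case: (eqVneq x y) => [exy|nxy]; case: (eqVneq x' y') => [exy'|nxy'].
  - by exists (@tvar F _ (@Ordinal 3 2 isT)).
  - have [t [t1 t2]] := HP i j x z x' y' z' nxy'.
    by exists t; rewrite -exy; split.
  - have [t [t1 t2]] := HP j i x' z' x y z nxy.
    by exists t; rewrite -exy'; split.
  - by exists (@tvar F _ (@Ordinal 3 0 isT)).
have [t Ht] := maj Hmed (@ttop F 'I_3) Hpair.
have Hdisc : forall i, is_discriminator_term (B i) t.
  move=> i x y z.
  have : good t (existT _ i (x, y, z)); last by [].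
  apply: Ht; apply/List.in_flat_map; exists i; split.
    by apply: mem_In; apply: mem_index_enum.
  by apply: List.in_map; apply: mem_In; apply: mem_index_enum.
by split; [move=> i; exists t; apply: Hdisc|exists t].
Qed.
End Final.

Unset Implicit Arguments.
Set Strict Implicit.


Theorem theorem5p8 (F : Type) (Fpos : F -> bool) (I : finType)
    (B : I -> CornishAlg Fpos) :
  [<->
   (* (1) *)
   (forall i, quasi_primal (B i)) /\
     (exists t : term F 'I_3, forall i, is_discriminator_term (B i) t);
   (* (2) *)
   (forall (i j : I) (Y : CornishSpace Fpos)
           (phi1 : Dcar (B i) -> cs_car Y) (phi2 : Dcar (B j) -> cs_car Y),
      is_morphism phi1 -> is_morphism phi2 -> jointly_surjective phi1 phi2 ->
      ordered_disjoint_union (range phi1) (range phi2) \/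
      (surjective_map phi1 /\ surjective_map phi2));
   (* (3) *)
   (forall i (S : set (Dcar (B i))), D_substructure S -> S <> set0 -> S = setT) /\
   (forall (i j : I) (Y : CornishSpace Fpos)
           (phi1 : Dcar (B i) -> cs_car Y) (phi2 : Dcar (B j) -> cs_car Y),
      is_morphism phi1 -> is_morphism phi2 -> jointly_surjective phi1 phi2 ->
      (exists a b, comparable_in (cs_le Y) (phi1 a) (phi2 b)) ->
      exists c d, phi1 c = phi2 d)
  ].
Proof.
set P0 := (_ /\ _).
have h01 : P0 -> forall (i j : I) (Y : CornishSpace Fpos)
           (phi1 : Dcar (B i) -> cs_car Y) (phi2 : Dcar (B j) -> cs_car Y),
      is_morphism phi1 -> is_morphism phi2 -> jointly_surjective phi1 phi2 ->
      ordered_disjoint_union (range phi1) (range phi2) \/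
      (surjective_map phi1 /\ surjective_map phi2).
  move=> [_ [t dt]] i j Y phi1 phi2 m1 m2 js.
  exact: (one_to_two (dt i) (dt j) m1 m2 js).
split; last split.
- exact: h01.
- move=> H2; split.
    have [_ [t dt]] : P0.
      apply: pair_to_one => i j x z x' y' z' nxy.
      have := H2 i j _ _ _ (cphi1_mor x z x' y' z') (cphi2_mor x z x' y' z') (@cphi_js _ _ _ _ x z x' y' z').
      case=> [[_ _ nc]|[s1 s2]].
        apply: core_term => p q le.
          exact: (nc _ _ (ex_intro2 _ _ p Logic.I erefl) (ex_intro2 _ _ q Logic.I erefl) (or_introl le)).
        exact: (nc _ _ (ex_intro2 _ _ p Logic.I erefl) (ex_intro2 _ _ q Logic.I erefl) (or_intror le)).
      exfalso; apply: (allmatch_contra nxy) => q.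
      exact: s1.
    by move=> i S; apply: one_simple (dt i) S.
  move=> i j Y phi1 phi2 m1 m2 js [a [b cab]].
  case: (H2 i j Y phi1 phi2 m1 m2 js) => [[_ _ nc]|[s1 s2]].
    by exfalso; apply: (nc _ _ (ex_intro2 _ _ a Logic.I erefl) (ex_intro2 _ _ b Logic.I erefl) cab).
  have [d e] := s2 (phi1 a); by exists a, d.
- move=> [Hs Hm]; apply: pair_to_one => i j x z x' y' z' nxy.
  have nomix : forall p q, ~ comparable_in (cs_le (CY x z x' y' z'))
      (cphi1 x z x' y' z' p) (cphi2 x z x' y' z' q).
    move=> p q cpq.
    have [c [d ecd]] := Hm i j _ _ _ (cphi1_mor x z x' y' z') (cphi2_mor x z x' y' z')
      (@cphi_js _ _ _ _ x z x' y' z') (ex_intro _ p (ex_intro _ q cpq)).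
    apply: (allmatch_contra (x:=x) (z:=z) (z':=z') nxy).
    pose S := [set q | exists p, cphi1 x z x' y' z' p = cphi2 x z x' y' z' q].
    have sub : D_substructure S.
      split; first exact: Dcar_closed.
      move=> f q' [p' e]; exists (Dop f p').
      have [_ _ c1] := cphi1_mor x z x' y' z'; have [_ _ c2] := cphi2_mor x z x' y' z'.
      by rewrite c1 c2 e.
    have S0 : S <> set0.
      move=> S0; have Sd : S d by exists c.
      by rewrite S0 in Sd.
    have ST := Hs j S sub S0.
    move=> q0; have : S q0 by rewrite ST.
    by case=> p0 e0; exists p0.
  apply: core_term => p q le; apply: (nomix p q); [left|right]; exact: le.
Qed.
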